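(* Let $G=(V,A)$ be a directed multigraph, $T^+,T^-\subseteq V$ disjoint, $T=T^+\cup T^-$, and let $k\in\mathbb{N}$, $k\geq1$. Then the family $$\mathcal X_k:=\{X\subseteq T:\ \text{there are disjoint } X\text{-cuts } S_1,\dots,S_k\in 2^V\}$$ is closed under set union and set intersection.
   Context: For $S\subseteq V$, $\delta(S)$ is the set of arcs with one endpoint in $S$ and the other in $V\setminus S$ (either direction). For $X\subseteq T$, sets $S_1,\dots,S_k\subseteq V$ are called disjoint $X$-cuts if $S_1\subseteq S_2\subseteq\dots\subseteq S_k$, each $S_i$ satisfies $X\cap T^+\subseteq S_i$ and $T^-\setminus X\subseteq V\setminus S_i$, and $\delta(S_i)\cap\delta(S_j)=\emptyset$ for all $i\ne j$. *)

(* Defs.v *)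
From mathcomp Require Import all_boot.
Set Implicit Arguments. Unset Strict Implicit. Unset Printing Implicit Defensive.

(* A finite directed multigraph G = (V, A): arcs are elements of the finite
   type A, arc a goes from [tail a] to [head a]; parallel arcs and loops allowed. *)

Section Cuts.
Variables (V A : finType) (tail head : A -> V).

Definition delta (S : {set V}) : {set A} :=
  [set a | (tail a \in S) != (head a \in S)].

Definition disjoint_Xcuts (Tp Tm X : {set V}) (k : nat) (S : 'I_k -> {set V}) : Prop :=
  [/\ (forall i j : 'I_k, (i <= j)%N -> S i \subset S j),
      (forall i : 'I_k, X :&: Tp \subset S i),
      (forall i : 'I_k, Tm :\: X \subset ~: S i)
    & (forall i j : 'I_k, i != j -> delta (S i) :&: delta (S j) = set0)].

Definition in_Xk (Tp Tm : {set V}) (k : nat) (X : {set V}) : Prop :=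
  X \subset Tp :|: Tm /\ exists S : 'I_k -> {set V}, disjoint_Xcuts Tp Tm X S.

End Cuts.

(* Main.v *)
Require Import Defs.
From mathcomp Require Import all_boot.

Section L.
Variables (V A : finType) (tail head : A -> V) (k : nat).

Definition mono (S : 'I_k -> {set V}) := forall i j : 'I_k, (i <= j)%N -> S i \subset S j.
Definition prop (S : 'I_k -> {set V}) := forall (i j : 'I_k) a, (i < j)%N ->
  (tail a \in S i -> head a \in S j) /\ (head a \in S i -> tail a \in S j).

Lemma key1 S : mono S -> (forall i j : 'I_k, i != j -> delta tail head (S i) :&: delta tail head (S j) = set0) -> prop S.
Proof.
move=> Hm Hd i j a ltij.
have Hij : i != j by rewrite neq_ltn ltij.
have sub := Hm i j (ltnW ltij).
have := Hd i j Hij => /setP /(_ a); rewrite !inE => H.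
split => Hin; apply/negPn/negP => Hout.
- have Ht := subsetP sub _ Hin.
  have Hh : head a \notin S i by apply/negP => /(subsetP sub); rewrite (negbTE Hout).
  by move: H; rewrite Hin (negbTE Hh) Ht (negbTE Hout).
- have Ht := subsetP sub _ Hin.
  have Hh : tail a \notin S i by apply/negP => /(subsetP sub); rewrite (negbTE Hout).
  by move: H; rewrite Hin (negbTE Hh) Ht (negbTE Hout).
Qed.

Lemma key2 S : mono S -> prop S -> (forall i j : 'I_k, i != j -> delta tail head (S i) :&: delta tail head (S j) = set0).
Proof.
move=> Hm Hp.
suff H : forall i j : 'I_k, (i < j)%N -> delta tail head (S i) :&: delta tail head (S j) = set0.
  move=> i j; rewrite neq_ltn => /orP [] lt; first exact: H.
  by rewrite setIC; apply: H.
move=> i j ltij; apply/setP => a; rewrite !inE.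
have sub := Hm i j (ltnW ltij).
have [P1 P2] := Hp i j a ltij.
case Ti: (tail a \in S i); case Hi: (head a \in S i) => //=.
- by rewrite (subsetP sub _ Ti) P1.
- by rewrite (subsetP sub _ Hi) P2.
Qed.


End L.

Theorem lemma4 (V A : finType) (tail head : A -> V) (Tp Tm : {set V})
  (HT : [disjoint Tp & Tm]) (k : nat) (Hk : (1 <= k)%N) (X Y : {set V}) :
  in_Xk tail head Tp Tm k X -> in_Xk tail head Tp Tm k Y ->
  in_Xk tail head Tp Tm k (X :|: Y) /\ in_Xk tail head Tp Tm k (X :&: Y).
Proof.
move=> [XT [S [Sm Sp Sm' Sd]]] [YT [R [Rm Rp Rm' Rd]]].
have PS := @key1 V A tail head k _ Sm Sd; have PR := @key1 V A tail head k _ Rm Rd.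
split; split.
- by rewrite subUset XT YT.
- exists (fun i => S i :|: R i).
  have M : mono V k (fun i => S i :|: R i).
    by move=> i j le; apply: setUSS; [apply: Sm | apply: Rm].
  split => //.
  + move=> i; apply/subsetP => x; rewrite !inE => /andP [/orP [] xX xT].
      by rewrite (subsetP (Sp i)) // inE xX xT.
    by rewrite (subsetP (Rp i)) ?orbT // inE xX xT.
  + move=> i; apply/subsetP => x; rewrite !inE negb_or => /andP [/andP [nX nY] xT].
    have h1 := subsetP (Sm' i) x; have h2 := subsetP (Rm' i) x; move: h1 h2.
    rewrite !inE nX nY xT => /(_ isT) h1 /(_ isT) h2.
    by rewrite (negbTE h1) (negbTE h2).
  + apply: key2 => // i j a lt; have [S1 S2] := PS i j a lt; have [R1 R2] := PR i j a lt.
    rewrite !inE; split => /orP [] H.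
    * by rewrite S1. * by rewrite R1 ?orbT. * by rewrite S2. * by rewrite R2 ?orbT.
- by apply: subset_trans XT; apply: subsetIl.
- exists (fun i => S i :&: R i).
  have M : mono V k (fun i => S i :&: R i).
    by move=> i j le; apply: setISS; [apply: Sm | apply: Rm].
  split => //.
  + move=> i; apply/subsetP => x; rewrite !inE => /andP [/andP [xX xY] xT].
    by rewrite (subsetP (Sp i)) ?(subsetP (Rp i)) // inE ?xX ?xY xT.
  + move=> i; apply/subsetP => x; rewrite !inE negb_and => /andP [/orP [] nX xT].
      have := subsetP (Sm' i) x; rewrite !inE nX xT => /(_ isT) /negbTE -> //.
    have := subsetP (Rm' i) x; rewrite !inE nX xT => /(_ isT) /negbTE ->.
    by rewrite andbF.
  + apply: key2 => // i j a lt; have [S1 S2] := PS i j a lt; have [R1 R2] := PR i j a lt.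
    rewrite !inE; split => /andP [H1 H2].
    * by rewrite S1 ?R1. * by rewrite S2 ?R2.
Qed.
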